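(* For every integer $k\geq 2$ and every graph $G$ containing at most one cycle, $\nu_{k}(G) \geq \left \lfloor \frac{\nu_{k-1}(G) + \nu_{k+1}(G)}{2} \right \rfloor$.
   Context: Graphs are finite, without loops, possibly with multiple edges. For $k\geq 1$, $\nu_k(G)$ is the maximum number of edges of a $k$-edge-colorable subgraph of $G$. *)

(* Defs.v *)
(* A finite loopless multigraph is given by a finite vertex
   type V, a finite edge type E and two endpoint maps u v : E -> V with
   u e != v e for every edge e (parallel edges allowed). *)
From mathcomp Require Import all_boot.
Set Implicit Arguments. Unset Strict Implicit. Unset Printing Implicit Defensive.

Section MultiGraph.
Variables (V E : finType) (u v : E -> V).

Definition incident (e : E) (x : V) : bool := (u e == x) || (v e == x).

Definition share_end (e f : E) : bool := [exists x, incident e x && incident f x].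

Definition k_colorable (k : nat) (F : {set E}) : bool :=
  [exists c : {ffun E -> 'I_k},
    [forall e in F, forall f in F, ((e != f) && share_end e f) ==> (c e != c f)]].

Definition nu (k : nat) : nat := \max_(F : {set E} | k_colorable k F) #|F|.

Definition deg_in (C : {set E}) (x : V) : nat := #|[set e in C | incident e x]|.

(* C is (the edge set of) a cycle: nonempty, connected, 2-regular on its
   vertices.  Two parallel edges form a cycle of length 2. *)
Definition is_cycle (C : {set E}) : Prop :=
  [/\ C != set0,
      forall x : V, (deg_in C x == 0) || (deg_in C x == 2)
    & forall e f, e \in C -> f \in C ->
        connect [rel a b | [&& a \in C, b \in C & share_end a b]] e f].

Definition at_most_one_cycle : Prop :=
  forall C D : {set E}, is_cycle C -> is_cycle D -> C = D.

End MultiGraph.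

(* Main.v *)
Require Import Defs.
From mathcomp Require Import all_boot.
From mathcomp Require Import zify.
Set Implicit Arguments. Unset Strict Implicit. Unset Printing Implicit Defensive.

Section Proofs.
Variables (V E : finType) (u v : E -> V).
Hypothesis loopless : forall e : E, u e != v e.
Implicit Types (A B S T H F C : {set E}) (x y z w : V) (e f g : E).
Local Notation inc := (incident u v).
Local Notation deg := (deg_in u v).
Local Notation shr := (share_end u v).

Definition Ix (x : V) : {set E} := [set e | inc e x].

Lemma degE A x : deg A x = #|A :&: Ix x|.
Proof. by rewrite /deg_in; apply: eq_card => e; rewrite !inE. Qed.

Lemma inc_u e : inc e (u e). Proof. by rewrite /incident eqxx. Qed.
Lemma inc_v e : inc e (v e). Proof. by rewrite /incident eqxx orbT. Qed.

Lemma incP e x : inc e x -> x = u e \/ x = v e.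
Proof. by rewrite /incident => /orP[/eqP->|/eqP->]; [left|right]. Qed.

Lemma shr_inc e f x : inc e x -> inc f x -> shr e f.
Proof. by move=> h1 h2; apply/existsP; exists x; rewrite h1 h2. Qed.

Lemma shrP e f : shr e f -> exists x, inc e x /\ inc f x.
Proof. by move/existsP=> [x /andP[h1 h2]]; exists x. Qed.

Lemma shrC e f : shr e f = shr f e.
Proof. by apply/idP/idP => /shrP[x [h1 h2]]; apply: (shr_inc (x:=x)). Qed.

Lemma deg_sub A B x : A \subset B -> deg A x <= deg B x.
Proof. by move=> h; rewrite !degE; apply: subset_leq_card; apply: setSI. Qed.

Lemma deg_D1 A g x : g \in A -> deg A x = deg (A :\ g) x + inc g x.
Proof.
move=> gA; rewrite !degE (cardsD1 g (A :&: Ix x)) addnC inE gA inE /=.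
congr (_ + _); apply: eq_card => e; rewrite !inE; by case: (e == g).
Qed.

Lemma deg_U1 A g x : g \notin A -> deg (g |: A) x = deg A x + inc g x.
Proof. by move=> gA; rewrite (@deg_D1 _ g) ?setU11 // setU1K. Qed.

Lemma deg_ninc A g x : ~~ inc g x -> deg (A :\ g) x = deg A x.
Proof.
move=> h; case gA: (g \in A); first by rewrite (@deg_D1 A g x) // (negbTE h) addn0.
by congr (deg _ x); apply/setP => e; rewrite !inE; case: eqP => // ->; rewrite gA.
Qed.

Lemma degUI S T x : deg (S :|: T) x + deg (S :&: T) x = deg S x + deg T x.
Proof.
rewrite !degE -[#|S :&: Ix x| + _]cardsUI setIUl; congr (_ + #|_|).
by rewrite setIACA setIid.
Qed.

Lemma deg_pos A e x : e \in A -> inc e x -> 0 < deg A x.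
Proof. by move=> h1 h2; rewrite degE card_gt0; apply/set0Pn; exists e; rewrite !inE h1. Qed.

Lemma deg0 A e x : deg A x = 0 -> e \in A -> inc e x -> False.
Proof. by move=> h1 h2 h3; have := deg_pos h2 h3; rewrite h1. Qed.

Lemma cards_split (G1 G2 S T : {set E}) :
  S :|: T = G1 :|: G2 -> S :&: T = G1 :&: G2 -> #|S| + #|T| = #|G1| + #|G2|.
Proof. by move=> h1 h2; rewrite -cardsUI h1 h2 cardsUI. Qed.

Lemma deg_split (G1 G2 S T : {set E}) x :
  S :|: T = G1 :|: G2 -> S :&: T = G1 :&: G2 -> deg S x + deg T x = deg G1 x + deg G2 x.
Proof. by move=> h1 h2; rewrite -degUI h1 h2 degUI. Qed.

Definition proper j (c : E -> 'I_j) (F : {set E}) :=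
  forall e f, e \in F -> f \in F -> e != f -> shr e f -> c e != c f.

Lemma colP j F : reflect (exists c : E -> 'I_j, proper c F) (k_colorable u v j F).
Proof.
apply: (iffP existsP) => [[c /forall_inP H]|[c H]].
  exists c => e f eF fF nef sef; have /forall_inP := H e eF.
  by move/(_ f fF)/implyP; apply; rewrite nef sef.
exists [ffun e => c e]; apply/forall_inP => e eF; apply/forall_inP => f fF.
by apply/implyP => /andP[nef sef]; rewrite !ffunE; apply: H.
Qed.

Lemma col_deg j F x : k_colorable u v j F -> deg F x <= j.
Proof.
move=> /colP[c H]; rewrite degE -(card_in_imset (f := c)).
  by apply: leq_trans (max_card _) _; rewrite card_ord.
move=> e f; rewrite !inE => /andP[eF ex] /andP[fF fx] ce.
apply/eqP; apply: contraT => nef; have := H e f eF fF nef (shr_inc ex fx).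
by rewrite ce eqxx.
Qed.

Lemma col0 j : 0 < j -> k_colorable u v j set0.
Proof. by move=> hj; apply/colP; exists (fun _ => Ordinal hj) => e f; rewrite inE. Qed.

Definition upd j (c : E -> 'I_j) g b := fun e => if e == g then b else c e.

Lemma proper_ext j (c : E -> 'I_j) H g b :
  g \notin H -> proper c H -> (forall f, f \in H -> shr g f -> c f != b) ->
  proper (upd c g b) (g |: H).
Proof.
move=> gH pc hb e f; rewrite !inE /upd.
case: (eqVneq e g) => [->|neg]; case: (eqVneq f g) => [->|nfg] //= eH fH nef sef.
- by rewrite eq_sym; apply: hb.
- by apply: hb => //; rewrite shrC.
- by apply: pc.
Qed.

Lemma free_color j (U : {set 'I_j}) : #|U| < j -> exists b, b \notin U.
Proof.
move=> h; apply/existsP; apply: contraLR h => /existsPn H; rewrite -leqNgt.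
have -> : U = setT by apply/setP => b; rewrite inE; apply/negPn/H.
by rewrite cardsT card_ord.
Qed.

Definition acyc (A : {set E}) := forall C, is_cycle u v C -> ~~ (C \subset A).

Lemma acyc_sub A B : A \subset B -> acyc B -> acyc A.
Proof.
move=> AB hB C hC; apply: contra (hB C hC) => CA; exact: subset_trans CA AB.
Qed.

Definition leaves (A : {set E}) := [set x | deg A x == 1].

Lemma leaf_edge H w : deg H w = 1 ->
  exists g, [/\ g \in H, inc g w & forall f, f \in H -> inc f w -> f = g].
Proof.
rewrite degE => /eqP/cards1P[g hg]; exists g.
have : g \in H :&: Ix w by rewrite hg set11.
rewrite !inE => /andP[-> ->]; split=> // f fH fw.
by apply/set1P; rewrite -hg !inE fH.
Qed.



Lemma deg_set0 x : deg set0 x = 0.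
Proof. by rewrite degE set0I cards0. Qed.

Lemma removal_leaves H g p : g \in H -> inc g p -> deg H p != 2 ->
  leaves (H :\ g) \subset (leaves H :\ p) :|: ([set u g; v g] :\ p).
Proof.
move=> gH gp hp; apply/subsetP => x; rewrite !inE => /eqP hx.
case: (eqVneq x p) => [xp|nxp] /=.
  subst x; move: hp; rewrite (deg_D1 _ gH) hx gp; done.
case: (boolP (inc g x)) => gx.
  by apply/orP; right; have [->|->] := incP gx; rewrite !eqxx ?orbT.
by rewrite -(deg_ninc H gx) hx.
Qed.

Lemma card_P2 g p : inc g p -> #|[set u g; v g] :\ p| <= 1.
Proof.
move=> gp; have pin : p \in [set u g; v g] by rewrite !inE; have [->|->] := incP gp; rewrite eqxx ?orbT.
have := cardsD1 p [set u g; v g]; rewrite pin cards2; case: (u g != v g) => /=; lia.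
Qed.

Section Comp.
Variables (H : {set E}) (e0 : E).
Hypothesis e0H : e0 \in H.
Hypothesis degH : forall x, (deg H x == 0) || (deg H x == 2).
Let R := [rel a b | [&& a \in H, b \in H & shr a b]].
Let C := [set f in H | connect R e0 f].
Let RC := [rel a b | [&& a \in C, b \in C & share_end u v a b]].

Lemma C_clos a b : a \in C -> b \in H -> shr a b -> b \in C.
Proof.
rewrite !inE => /andP[aH ea] bH ab; rewrite bH /=.
by apply: connect_trans ea (connect1 _); rewrite /= aH bH ab.
Qed.

Lemma C_path p a : a \in C -> path R a p -> path RC a p.
Proof.
elim: p a => [//|b p IH] a aC /= /andP[/and3P[aH bH ab] pp].
have bC := C_clos aC bH ab.
by rewrite aC bC ab /= IH.
Qed.

Lemma C_cycle : is_cycle u v C.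
Proof.
have e0C : e0 \in C by rewrite inE e0H connect0.
split.
- by apply/set0Pn; exists e0.
- move=> x; case: (boolP [exists f, (f \in C) && inc f x]) => [/existsP[f /andP[fC fx]]|/existsPn hn].
    suff -> : deg C x = deg H x by apply: degH.
    rewrite !degE; apply: eq_card => g; rewrite !inE.
    case gH: (g \in H); case gx: (inc g x); rewrite /= ?andbF ?andbT //.
    by have := C_clos fC gH (shr_inc fx gx); rewrite inE gH.
  apply/orP; left; rewrite degE cards_eq0; apply/eqP/setP => g; rewrite !inE.
  have := hn g; rewrite inE negb_and => /orP[/negbTE|/negbTE] ->; by rewrite ?andbF.
have symRC : symmetric RC by move=> a b /=; rewrite shrC; case: (a \in C); case: (b \in C).
have he : forall f, f \in C -> connect RC e0 f.
  move=> f; rewrite inE => /andP[_ /connectP[p pp ->]].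
  by apply/connectP; exists p => //; apply: C_path.
move=> f g fC gC; apply: connect_trans (he g gC).
by rewrite (sym_connect_sym symRC); apply: he.
Qed.

Lemma C_sub : C \subset H.
Proof. by apply/subsetP => f; rewrite inE => /andP[]. Qed.

End Comp.

Lemma cycle_exists n : forall H, #|H| <= n -> H != set0 -> #|leaves H| <= 1 ->
  exists C, is_cycle u v C /\ C \subset H.
Proof.
elim: n => [|n IH] H hn hne hl.
  by move: hne; rewrite -card_gt0; lia.
have step : forall p, (deg H p == 1) || (2 < deg H p) -> #|leaves H :\ p| = 0 ->
    exists C, is_cycle u v C /\ C \subset H.
  move=> p hp hlp.
  have : 0 < deg H p by case/orP: hp => [/eqP->|]; lia.
  rewrite degE card_gt0 => /set0Pn[g]; rewrite !inE => /andP[gH gp].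
  have hH := cardsD1 g H; rewrite gH in hH.
  have hp2 : deg H p != 2 by case/orP: hp => [/eqP->|] //; lia.
  have [C [hC CH']] : exists C, is_cycle u v C /\ C \subset H :\ g.
    apply: IH; first by move: hn; rewrite hH /= add1n ltnS.
    - apply: contraT; rewrite negbK => /eqP H0.
      have hp1 : deg H p = 1 by rewrite (deg_D1 _ gH) H0 deg_set0 gp.
      have hu : u g \in leaves H by rewrite inE (deg_D1 _ gH) H0 deg_set0 inc_u.
      have hv : v g \in leaves H by rewrite inE (deg_D1 _ gH) H0 deg_set0 inc_v.
      have : 1 < #|leaves H| by apply/card_gt1P; exists (u g), (v g); rewrite hu hv loopless.
      lia.
    - apply: leq_trans (subset_leq_card (removal_leaves gH gp hp2)) _.
      apply: leq_trans (leq_card_setU _ _) _.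
      by rewrite hlp add0n card_P2.
  by exists C; split=> //; apply: subset_trans CH' (subsetDl _ _).
case: (set0Pn (leaves H)) => [[p pl]|hl0].
  apply: (step p); first by move: pl; rewrite inE => ->.
  by have := cardsD1 p (leaves H); rewrite pl; lia.
have hl0' : leaves H = set0 by apply/eqP; apply: contraT => /set0Pn; auto.
case: (boolP [exists p, 2 < deg H p]) => [/existsP[p hp]|/existsPn h3].
  by apply: (step p); rewrite ?hp ?orbT // hl0' set0D cards0.
have degH : forall x, (deg H x == 0) || (deg H x == 2).
  move=> x; have := h3 x; have : x \notin leaves H by rewrite hl0' inE.
  rewrite inE; lia.
have [e0 e0H] := set0Pn _ hne.
by exists [set f in H | connect [rel a b | [&& a \in H, b \in H & shr a b]] e0 f];
  split; [apply: C_cycle | apply: C_sub].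
Qed.

Lemma two_leaves H : acyc H -> H != set0 ->
  exists w1 w2, [/\ w1 \in leaves H, w2 \in leaves H & w1 != w2].
Proof.
move=> ha hne; apply/card_gt1P; rewrite ltnNge; apply/negP => hl.
have [C [hC CH]] := cycle_exists (leqnn _) hne hl.
by have := ha C hC; rewrite CH.
Qed.



Lemma other_end g w : inc g w ->
  exists z, [/\ inc g z, z != w & forall x, inc g x -> x = w \/ x = z].
Proof.
case/incP => ->.
  exists (v g); rewrite inc_v eq_sym loopless; split=> // x /incP[]; auto.
exists (u g); rewrite inc_u loopless; split=> // x /incP[]; auto.
Qed.

Definition balanced S T := forall x, deg S x <= (deg T x).+1 /\ deg T x <= (deg S x).+1.

Lemma bal_sym S T : balanced S T -> balanced T S.
Proof. by move=> h x; have [] := h x; split. Qed.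

Lemma bal_add S T g w z : deg S w = 0 -> deg T w = 0 -> deg S z <= deg T z ->
  g \notin S -> balanced S T -> (forall x, inc g x -> x = w \/ x = z) ->
  balanced (g |: S) T.
Proof.
move=> hSw hTw hz gS hb hg x; rewrite deg_U1 //.
case: (boolP (inc g x)) => gx; last by rewrite addn0; apply: hb.
have [->|->] := hg x gx; rewrite ?hSw ?hTw; first by [].
by have := hb z; lia.
Qed.

Lemma bal_add2 S T g : g \notin S -> g \notin T -> balanced S T -> balanced (g |: S) (g |: T).
Proof. by move=> gS gT hb x; rewrite !deg_U1 //; have := hb x; lia. Qed.

Lemma deg_leaf0 H S g w : S \subset H :\ g -> (forall f, f \in H -> inc f w -> f = g) -> deg S w = 0.
Proof.
move=> SH hu; apply/eqP; rewrite degE cards_eq0; apply/eqP/setP => f; rewrite !inE.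
apply/negbTE/andP => -[fS fw]; have := subsetP SH f fS; rewrite !inE => /andP[nfg fH].
by rewrite (hu f fH fw) eqxx in nfg.
Qed.

Lemma split_forest n : forall F1 F2, #|F1 :|: F2| <= n -> acyc (F1 :|: F2) ->
  exists S T, [/\ S :|: T = F1 :|: F2, S :&: T = F1 :&: F2 & balanced S T].
Proof.
have base : forall F1 F2, F1 :|: F2 = set0 -> exists S T, [/\ S :|: T = F1 :|: F2, S :&: T = F1 :&: F2 & balanced S T].
  move=> F1 F2 h0; exists F1, F2; split=> // x.
  have h1 : F1 = set0 by apply/eqP; rewrite -subset0 -h0 subsetUl.
  have h2 : F2 = set0 by apply/eqP; rewrite -subset0 -h0 subsetUr.
  by rewrite h1 h2 deg_set0.
elim: n => [|n IH] F1 F2 hn ha.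
  by apply: base; apply/eqP; rewrite -cards_eq0; lia.
case: (eqVneq (F1 :|: F2) set0) => [h0|hne]; first by apply: base.
have [w [_ [wl _ _]]] := two_leaves ha hne.
move: wl; rewrite inE => /eqP /leaf_edge [g [gU gw hu]].
have [z [gz zw hg]] := other_end gw.
have hD : (F1 :\ g) :|: (F2 :\ g) = (F1 :|: F2) :\ g by rewrite setDUl.
have hc := cardsD1 g (F1 :|: F2); rewrite gU in hc.
have [S [T [hU hI hb]]] : exists S T, [/\ S :|: T = (F1 :\ g) :|: (F2 :\ g), S :&: T = (F1 :\ g) :&: (F2 :\ g) & balanced S T].
  apply: IH; rewrite hD; first by move: hn; rewrite hc /= add1n ltnS.
  by apply: acyc_sub ha; apply: subsetDl.
have SD : S \subset (F1 :|: F2) :\ g by rewrite -hD -hU subsetUl.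
have TD : T \subset (F1 :|: F2) :\ g by rewrite -hD -hU subsetUr.
have gS : g \notin S by apply: contraT => /negPn /(subsetP SD); rewrite !inE eqxx.
have gT : g \notin T by apply: contraT => /negPn /(subsetP TD); rewrite !inE eqxx.
have hSw := deg_leaf0 SD hu; have hTw := deg_leaf0 TD hu.
have mU : forall e, (e \in S :|: T) = (e \in F1 :\ g :|: F2 :\ g) by move=> e; rewrite hU.
have mI : forall e, (e \in S :&: T) = (e \in (F1 :\ g) :&: (F2 :\ g)) by move=> e; rewrite hI.
have g12 : (g \in F1) || (g \in F2) by rewrite -in_setU.
case g1: (g \in F1); case g2: (g \in F2); rewrite ?g1 ?g2 // in g12.
- exists (g |: S), (g |: T); split; last by apply: bal_add2.
  + apply/setP => e; move: (mU e); rewrite !inE.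
    by case: (eqVneq e g) => [->|_] /=; rewrite ?(negbTE gS) ?(negbTE gT) ?g1 ?g2.
  + apply/setP => e; move: (mI e); rewrite !inE.
    by case: (eqVneq e g) => [->|_] /=; rewrite ?(negbTE gS) ?(negbTE gT) ?g1 ?g2.
- have hU1 : forall S' T', S' = g |: S -> T' = T -> S' :|: T' = F1 :|: F2 /\ S' :&: T' = F1 :&: F2.
    move=> S' T' -> ->; split; apply/setP => e; [move: (mU e) | move: (mI e)]; rewrite !inE;
    by case: (eqVneq e g) => [->|_] /=; rewrite ?(negbTE gS) ?(negbTE gT) ?g1 ?g2.
  case: (leqP (deg S z) (deg T z)) => hz.
    have [h1 h2] := hU1 _ _ erefl erefl.
    by exists (g |: S), T; split=> //; apply: bal_add hz gS hb hg.
  exists S, (g |: T); have [h1 h2] := hU1 _ _ erefl erefl.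
  split.
  - by rewrite -h1; apply/setP => e; rewrite !inE; case: (e == g); case: (e \in S); case: (e \in T).
  - rewrite -h2; apply/setP => e; rewrite !inE.
    by case: (eqVneq e g) => [->|] /=; rewrite ?(negbTE gS) ?(negbTE gT) ?andbF.
  - idtac.
  by apply: bal_sym; apply: bal_add hTw hSw _ gT (bal_sym hb) hg; apply: ltnW.
- have hU1 : forall S' T', S' = g |: S -> T' = T -> S' :|: T' = F1 :|: F2 /\ S' :&: T' = F1 :&: F2.
    move=> S' T' -> ->; split; apply/setP => e; [move: (mU e) | move: (mI e)]; rewrite !inE;
    by case: (eqVneq e g) => [->|_] /=; rewrite ?(negbTE gS) ?(negbTE gT) ?g1 ?g2.
  case: (leqP (deg S z) (deg T z)) => hz.
    have [h1 h2] := hU1 _ _ erefl erefl.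
    by exists (g |: S), T; split=> //; apply: bal_add hz gS hb hg.
  exists S, (g |: T); have [h1 h2] := hU1 _ _ erefl erefl.
  split.
  - by rewrite -h1; apply/setP => e; rewrite !inE; case: (e == g); case: (e \in S); case: (e \in T).
  - rewrite -h2; apply/setP => e; rewrite !inE.
    by case: (eqVneq e g) => [->|] /=; rewrite ?(negbTE gS) ?(negbTE gT) ?andbF.
  - idtac.
  by apply: bal_sym; apply: bal_add hTw hSw _ gT (bal_sym hb) hg; apply: ltnW.
Qed.



Lemma leaf_extend j H g w z (c : E -> 'I_j) b : g \in H ->
  (forall f, f \in H -> inc f w -> f = g) -> (forall x, inc g x -> x = w \/ x = z) ->
  proper c (H :\ g) -> b \notin [set c f | f in (H :\ g) :&: Ix z] ->
  proper (upd c g b) H.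
Proof.
move=> gH hu hg pc hb; rewrite -(setD1K gH); apply: proper_ext; rewrite ?setD11 //.
move=> f; rewrite !inE => /andP[nfg fH] /shrP[x [gx fx]].
have [xw|xz] := hg x gx; subst x.
  by rewrite (hu f fH fx) eqxx in nfg.
apply: contra hb => /eqP <-; apply/imsetP; exists f => //; by rewrite !inE nfg fH.
Qed.

Lemma deg_minus H g z : g \in H -> inc g z -> deg H z = (deg (H :\ g) z).+1.
Proof. by move=> gH gz; rewrite (deg_D1 _ gH) gz addn1. Qed.


Lemma forest_col j n : 0 < j -> forall H, #|H| <= n -> acyc H -> (forall x, deg H x <= j) ->
  exists c : E -> 'I_j, proper c H.
Proof.
move=> hj; elim: n => [|n IH] H hn ha hd.
  have -> : H = set0 by apply/eqP; rewrite -cards_eq0; lia.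
  by exists (fun _ => Ordinal hj) => e f; rewrite inE.
case: (eqVneq H set0) => [->|hne].
  by exists (fun _ => Ordinal hj) => e f; rewrite inE.
have [w [_ [wl _ _]]] := two_leaves ha hne.
move: wl; rewrite inE => /eqP /leaf_edge [g [gH gw hu]].
have [z [gz zw hg]] := other_end gw.
have hc := cardsD1 g H; rewrite gH in hc.
have [c pc] : exists c : E -> 'I_j, proper c (H :\ g).
  apply: IH; first by move: hn; rewrite hc /= add1n ltnS.
  - by apply: acyc_sub ha; apply: subsetDl.
  - by move=> x; apply: leq_trans (hd x); apply: deg_sub; apply: subsetDl.
have hU : #|[set c f | f in (H :\ g) :&: Ix z]| < j.
  apply: leq_ltn_trans (leq_imset_card _ _) _; rewrite -degE.
  by have := hd z; rewrite (deg_minus gH gz).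
have [b hb] := free_color hU.
by exists (upd c g b); apply: leaf_extend hg pc hb.
Qed.

Lemma forest_col2 k x y n : 2 < k -> x != y -> forall H, #|H| <= n -> acyc H ->
  (forall z, deg H z <= k) -> deg H x < k -> deg H y < k ->
  exists (c : E -> 'I_k) (a : 'I_k),
    proper c H /\ (forall e, e \in H -> inc e x || inc e y -> c e != a).
Proof.
move=> hk hxy; elim: n => [|n IH] H hn ha hd hx hy.
  have -> : H = set0 by apply/eqP; rewrite -cards_eq0; lia.
  have hk0 : 0 < k by lia.
  by exists (fun _ => Ordinal hk0), (Ordinal hk0); split=> [e f|e]; rewrite inE.
case: (boolP ((deg H x <= 1) && (deg H y <= 1))) => [/andP[hx1 hy1]|hnot].
  have [c pc] := forest_col (ltnW (ltnW hk)) (leqnn _) ha hd.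
  have hU : #|[set c f | f in (H :&: Ix x) :|: (H :&: Ix y)]| < k.
    apply: leq_ltn_trans (leq_imset_card _ _) _.
    apply: leq_ltn_trans (leq_card_setU _ _) _; rewrite -!degE; lia.
  have [a ha'] := free_color hU.
  exists c, a; split=> // e eH hexy; apply: contra ha' => /eqP <-.
  by apply/imsetP; exists e => //; rewrite !inE eH; case/orP: hexy => ->; rewrite ?orbT.
have hne : H != set0.
  apply: contraNneq hnot => ->; by rewrite !deg_set0.
have [w1 [w2 [w1l w2l w12]]] := two_leaves ha hne.
have [w [wl wx wy]] : exists w, [/\ w \in leaves H, w != x & w != y].
  case h1: ((w1 != x) && (w1 != y)); first by exists w1; case/andP: h1.
  case h2: ((w2 != x) && (w2 != y)); first by exists w2; case/andP: h2.
  exfalso.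
  have e1 : (w1 == x) || (w1 == y) by move: h1; case: (w1 == x); case: (w1 == y).
  have e2 : (w2 == x) || (w2 == y) by move: h2; case: (w2 == x); case: (w2 == y).
  have [lx ly] : x \in leaves H /\ y \in leaves H.
    by case/orP: e1 => /eqP ?; case/orP: e2 => /eqP ?; subst; rewrite ?eqxx in w12.
  by move: hnot lx ly; rewrite !inE => /negP hnn /eqP lx1 /eqP ly1; apply: hnn; rewrite lx1 ly1.
move: wl; rewrite inE => /eqP /leaf_edge [g [gH gw hu]].
have [z [gz zw hg]] := other_end gw.
have hc := cardsD1 g H; rewrite gH in hc.
have sub : H :\ g \subset H by apply: subsetDl.
have [c [a [pc hca]]] : exists (c : E -> 'I_k) (a : 'I_k),
    proper c (H :\ g) /\ (forall e, e \in H :\ g -> inc e x || inc e y -> c e != a).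
  apply: IH; first by move: hn; rewrite hc /= add1n ltnS.
  - by apply: acyc_sub ha.
  - by move=> t; apply: leq_trans (hd t); apply: deg_sub.
  - by apply: leq_ltn_trans hx; apply: deg_sub.
  - by apply: leq_ltn_trans hy; apply: deg_sub.
set U := [set c f | f in (H :\ g) :&: Ix z].
have hUz : #|U| <= deg (H :\ g) z by rewrite degE; apply: leq_imset_card.
have hz := deg_minus gH gz.
have hgxy : forall e, e \in H -> inc e x || inc e y -> e != g -> c e != a.
  by move=> e eH hxe neg; apply: hca => //; rewrite !inE neg eH.
case: (boolP [exists b, (b \notin U) && (b != a)]) => [/existsP[b /andP[bU ba]]|/existsPn hno].
  exists (upd c g b), a; split; first by apply: leaf_extend hg pc bU.
  move=> e eH hexy; rewrite /upd; case: (eqVneq e g) => [_|neg] //.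
  by apply: hgxy.
have nofree : forall t, deg H t < k -> z != t.
  move=> t ht; apply/negP => /eqP zt; subst t.
  have : #|a |: U| < k.
    apply: leq_ltn_trans (leq_card_setU _ _) _; rewrite cards1; clear -hUz hz ht; lia.
  move/free_color => [b]; rewrite !inE negb_or => /andP[ba bU].
  by have := hno b; rewrite bU ba.
have zx := nofree x hx; have zy := nofree y hy.
have aU : a \notin U.
  have : #|U| < k by have := hd z; clear -hUz hz; lia.
  move/free_color => [b bU]; have := hno b; rewrite bU /= negbK => /eqP <-; exact: bU.
exists (upd c g a), a; split; first by apply: leaf_extend hg pc aU.
move=> e eH hexy; rewrite /upd; case: (eqVneq e g) => [eg|neg]; last by apply: hgxy.
subst e; exfalso; case/orP: hexy => /hg [] /eqP;
  by rewrite eq_sym ?(negbTE wx) ?(negbTE wy) ?(negbTE zx) ?(negbTE zy).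
Qed.




Lemma nu_ex j : 0 < j -> exists F, k_colorable u v j F /\ nu u v j = #|F|.
Proof.
move=> hj.
have h : 0 < #|[pred F : {set E} | k_colorable u v j F]|.
  by apply/card_gt0P; exists set0; rewrite inE col0.
by case: (eq_bigmax_cond (fun F : {set E} => #|F|) h) => F0 hF0 eq; exists F0.
Qed.

Lemma nu_ge j F : k_colorable u v j F -> #|F| <= nu u v j.
Proof. by move=> h; rewrite /nu; exact: (@leq_bigmax_cond _ (fun F => k_colorable u v j F) (fun F => #|F|) F h). Qed.

Lemma bal_bound S T G1 G2 k x : S :|: T = G1 :|: G2 -> S :&: T = G1 :&: G2 ->
  balanced S T -> deg G1 x + deg G2 x <= k + k -> deg S x <= k /\ deg T x <= k.
Proof.
move=> hU hI hb hd; have := deg_split x hU hI; have := hb x.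
move: (deg S x) (deg T x) (deg G1 x + deg G2 x) hd => a b s hd [h1 h2] hs.
split; lia.
Qed.

Lemma combine k G1 G2 : 0 < k -> acyc (G1 :|: G2) ->
  (forall x, deg G1 x + deg G2 x <= k + k) -> #|G1| + #|G2| <= nu u v k + nu u v k.
Proof.
move=> hk ha hd.
have [S [T [hU hI hb]]] := split_forest (leqnn _) ha.
have aS : acyc S by apply: acyc_sub ha; rewrite -hU subsetUl.
have aT : acyc T by apply: acyc_sub ha; rewrite -hU subsetUr.
have [c1 p1] := forest_col hk (leqnn _) aS (fun x => proj1 (bal_bound hU hI hb (hd x))).
have [c2 p2] := forest_col hk (leqnn _) aT (fun x => proj2 (bal_bound hU hI hb (hd x))).
rewrite -(cards_split hU hI); apply: leq_add; apply: nu_ge; apply/colP; eexists; eassumption.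
Qed.

Lemma add_edge k S e0 : 2 < k -> acyc S -> e0 \notin S -> (forall z, deg S z <= k) ->
  deg S (u e0) < k -> deg S (v e0) < k -> k_colorable u v k (e0 |: S).
Proof.
move=> hk aS eS hd h1 h2.
have [c [a [pc hca]]] := forest_col2 hk (loopless e0) (leqnn _) aS hd h1 h2.
apply/colP; exists (upd c e0 a); apply: proper_ext => // f fS /shrP [x [ex fx]].
by apply: hca => //; have [xe|xe] := incP ex; subst x; rewrite fx ?orbT.
Qed.

End Proofs.

From Stdlib Require Import Classical.

Theorem theorem13 (V E : finType) (u v : E -> V)
  (loopless : forall e : E, u e != v e)
  (unicyclic : at_most_one_cycle u v) (k : nat) (hk : 2 <= k) :
  (nu u v k.-1 + nu u v k.+1) %/ 2 <= nu u v k.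
Proof.
have hk1 : 0 < k.-1 by case: k hk => [|[|k]].
have [F1 [c1 e1]] := nu_ex u v hk1.
have [F2 [c2 e2]] := nu_ex u v (ltn0Sn k).
have d1 := fun x => col_deg x c1; have d2 := fun x => col_deg x c2.
have hdeg : forall x, deg_in u v F1 x + deg_in u v F2 x <= k + k.
  move=> x; have := d1 x; have := d2 x; case: k hk {hk1 c1 c2 e1 e2 d1 d2} => // k' _; lia.
rewrite e1 e2.
suff : #|F1| + #|F2| <= (nu u v k + nu u v k).+1 by move: (#|F1| + #|F2|) (nu u v k) => s n; lia.
case: (classic (exists C, is_cycle u v C)) => [[C hC]|hno]; last first.
  apply: leqW; apply: combine => //; first by lia.
  by move=> C hC; case: hno; exists C.
have acE : forall e0, e0 \in C -> acyc u v [set~ e0].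
  move=> e0 e0C D hD; apply/negP => sub; have eq := unicyclic D C hD hC; subst D.
  by have := subsetP sub e0 e0C; rewrite !inE eqxx.
have hsub : forall e0, (F1 :\ e0) :|: (F2 :\ e0) \subset [set~ e0].
  by move=> e0; apply/subsetP => f; rewrite !inE; case: (f == e0).
have hdeg' : forall e0 x, deg_in u v (F1 :\ e0) x + deg_in u v (F2 :\ e0) x <= k + k.
  move=> e0 x; apply: leq_trans (hdeg x); apply: leq_add; apply: deg_sub; apply: subsetDl.
case: (boolP [exists e0 in C, ~~ ((e0 \in F1) && (e0 \in F2))]) => [/exists_inP [e0 e0C he0]|/exists_inP hall].
  have := combine loopless (ltnW hk) (acyc_sub (hsub e0) (acE e0 e0C)) (hdeg' e0).
  have := cardsD1 e0 F1; have := cardsD1 e0 F2.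
  move: he0; case: (e0 \in F1); case: (e0 \in F2) => //= _;
  move: (#|F1 :\ e0|) (#|F2 :\ e0|) (nu u v k) => p q n; lia.
have CF : forall e0, e0 \in C -> (e0 \in F1) && (e0 \in F2).
  by move=> e0 e0C; apply: contraT => h; case: hall; exists e0.
case: hC => hne hdC hconC.
have [e0 e0C] := set0Pn _ hne.
have /andP [e1F e2F] := CF e0 e0C.
case: (eqVneq k 2) => [k2|k3].
  exfalso; subst k.
  have hCu : deg_in u v C (u e0) = 2.
    have := deg_pos e0C (inc_u u v e0); have := hdC (u e0); case/orP => /eqP -> //.
  have : deg_in u v C (u e0) <= deg_in u v F1 (u e0).
    by apply: deg_sub; apply/subsetP => f fC; have /andP[] := CF f fC.
  by rewrite hCu => /leq_trans/(_ (d1 (u e0))).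
have hk3 : 2 < k by rewrite ltn_neqAle eq_sym k3 hk.
have [S [T [hU hI hb]]] := split_forest loopless (leqnn _) (acyc_sub (hsub e0) (acE e0 e0C)).
have aS : acyc u v S by apply: acyc_sub (acE e0 e0C); rewrite (subset_trans _ (hsub e0)) // -hU subsetUl.
have aT : acyc u v T by apply: acyc_sub (acE e0 e0C); rewrite (subset_trans _ (hsub e0)) // -hU subsetUr.
have eS : e0 \notin S.
  apply/negP => /(subsetP (subsetUl S T)); rewrite hU !inE eqxx; by [].
have eT : e0 \notin T.
  apply/negP => /(subsetP (subsetUr S T)); rewrite hU !inE eqxx; by [].
have bnd := fun x => bal_bound hU hI hb (hdeg' e0 x).
have bnd' : forall x, incident u v e0 x -> deg_in u v S x < k /\ deg_in u v T x < k.
  move=> x ex; have h1 := deg_minus e1F ex; have h2 := deg_minus e2F ex.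
  have hs : deg_in u v (F1 :\ e0) x + deg_in u v (F2 :\ e0) x <= k.-1 + k.-1.
    move: (d1 x) (d2 x); rewrite h1 h2.
    move: (deg_in u v (F1 :\ e0) x) (deg_in u v (F2 :\ e0) x) => p q; clear -hk3; lia.
  have [] := bal_bound hU hI hb hs.
  move: (deg_in u v S x) (deg_in u v T x) => p q; clear -hk3; lia.
have cS := add_edge loopless hk3 aS eS (fun x => proj1 (bnd x)) (proj1 (bnd' _ (inc_u u v e0))) (proj1 (bnd' _ (inc_v u v e0))).
have cT := add_edge loopless hk3 aT eT (fun x => proj2 (bnd x)) (proj2 (bnd' _ (inc_u u v e0))) (proj2 (bnd' _ (inc_v u v e0))).
have := nu_ge cS; have := nu_ge cT; rewrite !cardsU1 (negbTE eS) (negbTE eT).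
have := cards_split hU hI; have := cardsD1 e0 F1; have := cardsD1 e0 F2; rewrite e1F e2F.
move: #|S| #|T| #|F1| #|F2| #|F1 :\ e0| #|F2 :\ e0| (nu u v k) => a b c d p q n /=.
clear; lia.
Qed.
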